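(* Let $H=(V,E)$ be a $k$-uniform hypergraph and let $\mathcal{S}$ be the family of all its exact covers, i.e. all $E'\subseteq E$ with $\bigcup_{e\in E'}e=V$ and $e_1\cap e_2=\emptyset$ for distinct $e_1,e_2\in E'$. Let $f:E\to\mathbb{Z}_{>0}$ be any function and $m$ a positive integer. Then for every subset $U\subseteq V$, in the polynomial ring over $\mathrm{GF}(2^m)$ in the variables $\{v_e\}_{e\in E}$, $$\sum_{X\subseteq V\setminus U} W_{2,f}(H,U,X)=\sum_{E'\in\mathcal{S}}\prod_{e\in E'}v_e^{f(e)},$$ where $$W_{2,f}(H,U,X)=\sum_{E''}\prod_{e\in E''}v_e^{f(e)},$$ the sum ranging over all $E''\subseteq E$ satisfying: (Avoidance) $e\cap X=\emptyset$ for all $e\in E''$; (Cardinality) $|E''|=|V|/k$; (Coverage) $U\subseteq\bigcup_{e\in E''}e$; (Disjointness) $e_1\cap e_2\cap U=\emptyset$ for all distinct $e_1,e_2\in E''$.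
   Context: A hypergraph $H=(V,E)$ consists of a finite vertex set $V$ and a multiset $E$ of subsets of $V$; it is $k$-uniform if every edge has exactly $k$ vertices. Subsets of $E$ are sub-multisets, with each occurrence of an edge treated as a distinct element carrying its own variable $v_e$. *)

(* Defs.v *)
From HB Require Import structures.
From mathcomp Require Import all_boot all_order all_algebra all_field.
From mathcomp Require Import mpoly.
Set Implicit Arguments.
Unset Strict Implicit.
Unset Printing Implicit Defensive.
Import GRing.Theory.
Local Open Scope ring_scope.

(* A hypergraph H = (V, E): V is a finite type, E is a multiset of edges,
   represented as a family of subsets of V indexed by 'I_n (each index is a
   distinct edge occurrence, carrying its own variable 'X_i). *)

Definition k_uniform (V : finType) (n k : nat) (E : 'I_n -> {set V}) : Prop :=
  forall i, #|E i| = k.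

Definition edge_union (V : finType) (n : nat) (E : 'I_n -> {set V})
  (S : {set 'I_n}) : {set V} := \bigcup_(i in S) E i.

Definition exact_cover (V : finType) (n : nat) (E : 'I_n -> {set V})
  (S : {set 'I_n}) : bool :=
  (edge_union E S == [set: V]) &&
  [forall i in S, forall j in S, (i != j) ==> [disjoint E i & E j]].

Definition edge_monomial (F : fieldType) (n : nat) (f : 'I_n -> nat)
  (S : {set 'I_n}) : {mpoly F[n]} := \prod_(i in S) 'X_i ^+ f i.

(* the conditions on E'' in W_{2,f}(H,U,X); |E''| = |V|/k is written
   |E''| * k = |V| *)
Definition W_admissible (V : finType) (n k : nat) (E : 'I_n -> {set V})
  (U X : {set V}) (S : {set 'I_n}) : bool :=
  [&& [forall i in S, [disjoint E i & X]],
      #|S| * k == #|V|,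
      U \subset edge_union E S &
      [forall i in S, forall j in S,
         (i != j) ==> [disjoint E i :&: E j & U]]].

Definition W2f (F : fieldType) (V : finType) (n k : nat)
  (E : 'I_n -> {set V}) (f : 'I_n -> nat) (U X : {set V}) : {mpoly F[n]} :=
  \sum_(S : {set 'I_n} | W_admissible k E U X S) edge_monomial F f S.

(* Main.v *)
Require Import Defs.
From HB Require Import structures.
From mathcomp Require Import all_boot all_order all_algebra all_field.
From mathcomp Require Import mpoly.
Local Open Scope ring_scope.
Import GRing.Theory.

Section Helpers.
Variables (V : finType) (n : nat) (E : 'I_n -> {set V}).

Lemma card_bigcup_le (S : {set 'I_n}) :
  (#|\bigcup_(i in S) E i| <= \sum_(i in S) #|E i|)%N.
Proof.
apply: (big_ind2 (fun (A : {set V}) (a : nat) => #|A| <= a)%N) => //.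
  by rewrite cards0.
move=> A a B b hA hB; apply: leq_trans (leq_card_setU _ _) (leq_add hA hB).
Qed.

Lemma card_bigcup_disj (S : {set 'I_n}) :
  {in S &, forall i j, i != j -> [disjoint E i & E j]} ->
  #|\bigcup_(i in S) E i| = (\sum_(i in S) #|E i|)%N.
Proof.
elim: #|S| {-2}S (eqxx #|S|) => [|c IH] T.
  move=> /eqP/cards0_eq -> _; by rewrite !big_set0 cards0.
move=> hT hd.
have [i iT] : exists i, i \in T.
  by apply/set0Pn; rewrite -card_gt0 (eqP hT).
rewrite (bigD1 i) //= (bigD1 i iT) /=.
have e1 : \bigcup_(j in T | j != i) E j = \bigcup_(j in T :\ i) E j.
  by apply: eq_bigl => j; rewrite in_setD1 andbC.
have e2 : (\sum_(j in T | j != i) #|E j| = \sum_(j in T :\ i) #|E j|)%N.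
  by apply: eq_bigl => j; rewrite in_setD1 andbC.
rewrite e1 e2.
have hdis : [disjoint E i & \bigcup_(j in T :\ i) E j].
  apply: bigcup_disjoint => j; rewrite in_setD1 => /andP[ji jT].
  by apply: hd => //; rewrite eq_sym.
move: (leq_card_setU (E i) (\bigcup_(j in T :\ i) E j)) => [_].
rewrite hdis => /eqP ->; congr (_ + _)%N.
apply: IH.
  by move: hT; rewrite (cardsD1 i) iT add1n eqSS.
move=> a b; rewrite !in_setD1 => /andP[_ aT] /andP[_ bT]; exact: hd.
Qed.

Lemma uniform_cover_disj (k : nat) (S : {set 'I_n}) :
  k_uniform k E -> \bigcup_(i in S) E i = [set: V] -> (#|S| * k)%N = #|V| ->
  {in S &, forall i j, i != j -> [disjoint E i & E j]}.
Proof.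
move=> hk hU hc i j iS jS ij.
apply/negPn/negP => hnd.
have hsum : forall T : {set 'I_n}, (\sum_(l in T) #|E l| = #|T| * k)%N.
  by move=> T; rewrite (eq_bigr (fun _ => k)) ?sum_nat_const // => l _; rewrite hk.
have : (#|\bigcup_(l in S) E l| < \sum_(l in S) #|E l|)%N.
  rewrite (bigD1 i) //= (bigD1 i iS) /=.
  set B := \bigcup_(l in S | l != i) E l.
  have hB : (#|B| <= \sum_(l in S | l != i) #|E l|)%N.
    rewrite /B.
    have -> : \bigcup_(l in S | l != i) E l = \bigcup_(l in S :\ i) E l.
      by apply: eq_bigl => l; rewrite in_setD1 andbC.
    have -> : (\sum_(l in S | l != i) #|E l| = \sum_(l in S :\ i) #|E l|)%N.
      by apply: eq_bigl => l; rewrite in_setD1 andbC.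
    exact: card_bigcup_le.
  have hnB : ~~ [disjoint E i & B].
    apply: contra hnd => hd; apply: disjointWr hd.
    by apply: (bigcup_sup j); rewrite jS eq_sym.
  move: (leq_card_setU (E i) B) => [hle heq].
  rewrite ltn_neqAle; apply/andP; split.
    rewrite neq_ltn; apply/orP; left.
    apply: (@leq_trans (#|E i| + #|B|)).
      by rewrite ltn_neqAle hle heq andbT.
    by rewrite leq_add2l.
  by apply: leq_trans hle _; rewrite leq_add2l.
by rewrite hU cardsT hsum hc ltnn.
Qed.

End Helpers.

Theorem lemma2p4 (V : finType) (n k : nat) (E : 'I_n -> {set V})
  (f : 'I_n -> nat) (m : nat) (F : finFieldType) :
  (0 < k)%N -> k_uniform k E -> (forall i, 0 < f i)%N -> (0 < m)%N ->
  2%N \in [pchar F] -> #|F| = (2 ^ m)%N ->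
  forall U : {set V},
    \sum_(X : {set V} | X \subset ~: U) W2f F k E f U X =
    \sum_(S : {set 'I_n} | exact_cover E S) edge_monomial F f S.
Proof.
move=> k0 hk _ _ h2 _ U.
rewrite /W2f.
under eq_bigr => X _ do rewrite big_mkcond /=.
rewrite exchange_big /= [RHS]big_mkcond /=.
apply: eq_bigr => S _.
rewrite -big_mkcondr /=.
set C := [&& #|S| * k == #|V|, U \subset edge_union E S &
      [forall i in S, forall j in S,
         (i != j) ==> [disjoint E i :&: E j & U]]]%N.
have hadm : forall X, W_admissible k E U X S =
    [disjoint edge_union E S & X] && C.
  move=> X; rewrite /W_admissible /C; congr (_ && _).
  apply/forall_inP/idP => [h|h i iS].
    by rewrite disjoint_sym; apply: bigcup_disjoint => i iS; rewrite disjoint_sym; apply: h.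
  rewrite disjoint_sym in h; rewrite disjoint_sym; apply: disjointWr h.
  exact: bigcup_sup.
under eq_bigl => X do rewrite hadm.
case hC: C; last first.
  under eq_bigl => X do rewrite andbF andbF.
  rewrite big_pred0 //.
  case hex: (exact_cover E S) => //.
  move: hC; rewrite /C; move: hex => /andP[/eqP hU /forall_inP hd].
  have hdisj : {in S &, forall i j, i != j -> [disjoint E i & E j]}.
    by move=> i j iS jS ij; move: (hd i iS) => /forall_inP/(_ j jS)/implyP; apply.
  idtac.
  rewrite /edge_union in hU; rewrite /edge_union hU subsetT -cardsT -hU (@card_bigcup_disj _ _ E S hdisj).
  rewrite (eq_bigr (fun _ => k)) ?sum_nat_const ?eqxx /=; last by move=> i _; rewrite hk.
  move=> /negbT/negP; case; apply/forall_inP => i iS; apply/forall_inP => j jS.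
  apply/implyP => ij; move/disjoint_setI0: (hdisj i j iS jS ij) => ->.
  by rewrite disjoints_subset sub0set.
under eq_bigl => X do rewrite andbT.
rewrite sumr_const.
have -> : #|[pred X : {set V} | (X \subset ~: U) && [disjoint edge_union E S & X]]| =
          #|powerset (~: U :\: edge_union E S)|.
  apply: eq_card => X; rewrite powersetE subsetD disjoint_sym inE /= //.
rewrite card_powerset.
move: hC; rewrite /C => /and3P[hc hcov hdU].
case hex: (exact_cover E S).
  have -> : ~: U :\: edge_union E S = set0.
    by move: hex => /andP[/eqP -> _]; rewrite setDT.
  by rewrite cards0 expn0 mulr1n.
have hne : (0 < #|~: U :\: edge_union E S|)%N.
  rewrite card_gt0; apply/negP => /eqP h0.
  have hUT : edge_union E S = [set: V].
    apply/eqP; rewrite eqEsubset subsetT /=; apply/subsetP => x _.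
    case xU: (x \in U); first by apply: (subsetP hcov).
    apply/negPn/negP => xn.
    have : x \in ~: U :\: edge_union E S by rewrite !inE xU xn.
    by rewrite h0 inE.
  move/negbT/negP: hex; apply; apply/andP; split; first by rewrite hUT.
  have hdisj := @uniform_cover_disj _ _ E k S hk hUT (eqP hc).
  apply/forall_inP => i iS; apply/forall_inP => j jS; apply/implyP => ij.
  exact: hdisj.
case: #|_| hne => // c _.
rewrite expnS mulrnA -[_ *+ 2]mulr_natr -mpolyC_nat (pcharf0 h2).
by rewrite mulr0 mul0rn.
Qed.
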